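(* Let $\mathcal{A}=\mathcal{R}*_K\mathcal{S}*_L\mathcal{T}\in\mathbb{C}^{I_1\times\cdots\times I_N\times J_1\times\cdots\times J_M}$, where $\mathcal{R}\in\mathbb{C}^{I_1\times\cdots\times I_N\times H_1\times\cdots\times H_K}$, $\mathcal{S}\in\mathbb{C}^{H_1\times\cdots\times H_K\times G_1\times\cdots\times G_L}$ and $\mathcal{T}\in\mathbb{C}^{G_1\times\cdots\times G_L\times J_1\times\cdots\times J_M}$. Then $$(\mathcal{R}^{\dagger}*_N\mathcal{A}*_M\mathcal{T}^{\dagger})^{\dagger}=(\mathcal{A}*_M\mathcal{T}^{\dagger})^{\dagger}*_N\mathcal{A}*_M(\mathcal{R}^{\dagger}*_N\mathcal{A})^{\dagger}.$$
   Context: $\mathbb{C}^{I_1\times\cdots\times I_N}$ denotes the set of complex tensors of order $N$ and dimension $I_1\times\cdots\times I_N$. For $\mathcal{A}\in\mathbb{C}^{I_1\times\cdots\times I_N\times K_1\times\cdots\times K_N}$ and $\mathcal{B}\in\mathbb{C}^{K_1\times\cdots\times K_N\times J_1\times\cdots\times J_M}$, the Einstein product $\mathcal{A}*_N\mathcal{B}\in\mathbb{C}^{I_1\times\cdots\times I_N\times J_1\times\cdots\times J_M}$ is defined by $(\mathcal{A}*_N\mathcal{B})_{i_1\dots i_N j_1\dots j_M}=\sum_{k_1,\dots,k_N}a_{i_1\dots i_N k_1\dots k_N}b_{k_1\dots k_N j_1\dots j_M}$; it is associative. For $\mathcal{A}\in\mathbb{C}^{I_1\times\cdots\times I_N\times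 J_1\times\cdots\times J_M}$, $\mathcal{A}^H$ denotes the conjugate transpose, $(\mathcal{A}^H)_{j_1\dots j_M i_1\dots i_N}=\overline{a_{i_1\dots i_N j_1\dots j_M}}$, and the Moore–Penrose inverse $\mathcal{A}^{\dagger}$ is the unique tensor $\mathcal{X}\in\mathbb{C}^{J_1\times\cdots\times J_M\times I_1\times\cdots\times I_N}$ with $\mathcal{A}*_M\mathcal{X}*_N\mathcal{A}=\mathcal{A}$, $\mathcal{X}*_N\mathcal{A}*_M\mathcal{X}=\mathcal{X}$, $(\mathcal{A}*_M\mathcal{X})^H=\mathcal{A}*_M\mathcal{X}$, $(\mathcal{X}*_N\mathcal{A})^H=\mathcal{X}*_N\mathcal{A}$. *)

(* Defs.v *)
(* Tensors over a numeric closed field C (e.g. the complex numbers),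
   with conjugation z^*. *)
From HB Require Import structures.
From mathcomp Require Import all_boot all_order all_algebra.
From Stdlib Require Import ClassicalEpsilon.
Set Implicit Arguments. Unset Strict Implicit. Unset Printing Implicit Defensive.
Import Order.TTheory GRing.Theory Num.Theory.
Local Open Scope ring_scope.

Definition midx (N : nat) (I : 'I_N -> nat) : finType :=
  {dffun forall k : 'I_N, 'I_(I k)}.

Definition tensor (C : numClosedFieldType) (N : nat) (I : 'I_N -> nat)
  (M : nat) (J : 'I_M -> nat) : Type := midx I -> midx J -> C.

Definition einstein (C : numClosedFieldType) N (I : 'I_N -> nat) K (H : 'I_K -> nat)
  M (J : 'I_M -> nat) (A : tensor C I H) (B : tensor C H J) : tensor C I J :=
  fun i j => \sum_(k : midx H) A i k * B k j.

Definition ctrans (C : numClosedFieldType) N (I : 'I_N -> nat) M (J : 'I_M -> nat)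
  (A : tensor C I J) : tensor C J I := fun j i => (A i j)^*.

Definition is_mpinv (C : numClosedFieldType) N (I : 'I_N -> nat) M (J : 'I_M -> nat)
  (A : tensor C I J) (X : tensor C J I) : Prop :=
  [/\ einstein (einstein A X) A = A,
      einstein (einstein X A) X = X,
      ctrans (einstein A X) = einstein A X
    & ctrans (einstein X A) = einstein X A].

Definition mpinv (C : numClosedFieldType) N (I : 'I_N -> nat) M (J : 'I_M -> nat)
  (A : tensor C I J) : tensor C J I :=
  epsilon (inhabits (fun _ _ => 0)) (is_mpinv A).

(* Main.v *)
Require Import Defs.
From mathcomp Require Import all_boot all_order all_algebra.
From Stdlib Require Import FunctionalExtensionality ClassicalEpsilon.
Set Implicit Arguments. Unset Strict Implicit. Unset Printing Implicit Defensive.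
Import Order.TTheory GRing.Theory Num.Theory.
Local Open Scope ring_scope.

Section Mx.
Variable C : numClosedFieldType.

Definition hadj m n (A : 'M[C]_(m, n)) : 'M[C]_(n, m) := (map_mx Num.conj A)^T.

Lemma hadjM m n p (A : 'M[C]_(m, n)) (B : 'M[C]_(n, p)) :
  hadj (A *m B) = hadj B *m hadj A.
Proof. by rewrite /hadj map_mxM trmx_mul. Qed.

Lemma hadjK m n (A : 'M[C]_(m, n)) : hadj (hadj A) = A.
Proof. by apply/matrixP => i j; rewrite !mxE conjCK. Qed.

Lemma hadjV n (A : 'M[C]_n) : hadj (invmx A) = invmx (hadj A).
Proof. by rewrite /hadj map_invmx trmx_inv. Qed.

Lemma hadj_free m n (A : 'M[C]_(m, n)) : row_free (hadj A) = row_full A.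
Proof. by rewrite /row_free /row_full /hadj mxrank_tr mxrank_map. Qed.

Lemma hadj_pos n (v : 'rV[C]_n) : v *m hadj v = 0 -> v = 0.
Proof.
move=> h; apply/rowP => j.
have := congr1 (fun M : 'M[C]_1 => M 0 0) h; rewrite !mxE.
move/psumr_eq0P => H.
have Hn : forall i : 'I_n, true -> 0 <= v 0 i * hadj v i 0.
  by move=> i _; rewrite !mxE mul_conjC_ge0.
have := H Hn j isT.
by rewrite !mxE => /eqP; rewrite mul_conjC_eq0 => /eqP ->.
Qed.

Lemma hadj_unit m n (G : 'M[C]_(m, n)) : row_free G -> G *m hadj G \in unitmx.
Proof.
move=> fG; rewrite -row_free_unit -kermx_eq0.
apply/eqP/row_matrixP => i; rewrite row0.
set v := row i _.
have h : v *m (G *m hadj G) = 0 by rewrite /v -row_mul mulmx_ker row0.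
have h2 : (v *m G) *m hadj (v *m G) = 0.
  by rewrite hadjM !mulmxA -(mulmxA v) h mul0mx.
apply: (row_free_inj fG); rewrite /= mul0mx; exact: hadj_pos.
Qed.

Definition mx_mp m n (A : 'M[C]_(m, n)) (X : 'M[C]_(n, m)) :=
  [/\ A *m X *m A = A, X *m A *m X = X, hadj (A *m X) = A *m X
    & hadj (X *m A) = X *m A].

Lemma mx_mp_fact m n r (F : 'M[C]_(m, r)) (G : 'M[C]_(r, n)) :
  G *m hadj G \in unitmx -> hadj F *m F \in unitmx ->
  exists X, mx_mp (F *m G) X.
Proof.
move=> uG uF.
set P := invmx (hadj F *m F); set Q := invmx (G *m hadj G).
have hP : hadj P = P by rewrite /P hadjV hadjM hadjK.
have hQ : hadj Q = Q by rewrite /Q hadjV hadjM hadjK.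
have k1 p (Z : 'M[C]_(r, p)) : G *m (hadj G *m (Q *m Z)) = Z.
  by rewrite !mulmxA /Q mulmxV // mul1mx.
have k2 p (Z : 'M[C]_(r, p)) : Q *m (G *m (hadj G *m Z)) = Z.
  by rewrite (mulmxA G) mulmxA /Q mulVmx // mul1mx.
have k3 p (Z : 'M[C]_(r, p)) : P *m (hadj F *m (F *m Z)) = Z.
  by rewrite (mulmxA (hadj F)) mulmxA /P mulVmx // mul1mx.
exists (hadj G *m Q *m P *m hadj F).
split.
- by rewrite -!mulmxA k1 k3.
- by rewrite -!mulmxA k3 k2.
- by rewrite -!mulmxA k1 !hadjM hadjK hP -!mulmxA.
- by rewrite -!mulmxA k3 !hadjM hadjK hQ -!mulmxA.
Qed.

Lemma mx_mp_exists m n (A : 'M[C]_(m, n)) : exists X, mx_mp A X.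
Proof.
rewrite -(mulmx_base A); apply: mx_mp_fact.
  by apply: hadj_unit; exact: row_base_free.
by rewrite -{2}(hadjK (col_base A)); apply: hadj_unit; rewrite hadj_free col_base_full.
Qed.

End Mx.
Section T.
Variable C : numClosedFieldType.

Definition toM N (I : 'I_N -> nat) M (J : 'I_M -> nat) (A : tensor C I J)
  : 'M[C]_(#|midx I|, #|midx J|) :=
  \matrix_(i, j) A (enum_val i) (enum_val j).

Definition ofM N (I : 'I_N -> nat) M (J : 'I_M -> nat)
  (X : 'M[C]_(#|midx I|, #|midx J|)) : tensor C I J :=
  fun i j => X (enum_rank i) (enum_rank j).

Lemma ofMK N (I : 'I_N -> nat) M (J : 'I_M -> nat) (A : tensor C I J) :
  ofM (toM A) = A.
Proof.
apply: functional_extensionality => i; apply: functional_extensionality => j.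
by rewrite /ofM /toM mxE !enum_rankK.
Qed.

Lemma toMK N (I : 'I_N -> nat) M (J : 'I_M -> nat) (X : 'M[C]_(#|midx I|, #|midx J|)) :
  toM (ofM X) = X.
Proof. by apply/matrixP => i j; rewrite /ofM /toM mxE !enum_valK. Qed.

Lemma einstein_ofM N (I : 'I_N -> nat) K (H : 'I_K -> nat) M (J : 'I_M -> nat)
  (P : 'M[C]_(#|midx I|, #|midx H|)) (Q : 'M[C]_(#|midx H|, #|midx J|)) :
  einstein (ofM P) (ofM Q) = ofM (P *m Q).
Proof.
apply: functional_extensionality => i; apply: functional_extensionality => j.
rewrite /einstein /ofM mxE (reindex (@enum_val _ (midx H))) /=.
  by apply: eq_bigr => k _; rewrite enum_valK.
by exists (@enum_rank _) => x _; [apply: enum_valK | apply: enum_rankK].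
Qed.

Lemma ctrans_ofM N (I : 'I_N -> nat) M (J : 'I_M -> nat)
  (P : 'M[C]_(#|midx I|, #|midx J|)) : ctrans (ofM P) = ofM (hadj P).
Proof.
apply: functional_extensionality => i; apply: functional_extensionality => j.
by rewrite /ctrans /ofM /hadj !mxE.
Qed.

Lemma eA N (I : 'I_N -> nat) K (H : 'I_K -> nat) L (G : 'I_L -> nat) M (J : 'I_M -> nat)
  (A : tensor C I H) (B : tensor C H G) (D : tensor C G J) :
  einstein (einstein A B) D = einstein A (einstein B D).
Proof.
rewrite -(ofMK A) -(ofMK B) -(ofMK D) !einstein_ofM.
by rewrite mulmxA.
Qed.

Lemma hM N (I : 'I_N -> nat) K (H : 'I_K -> nat) M (J : 'I_M -> nat)
  (A : tensor C I H) (B : tensor C H J) :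
  ctrans (einstein A B) = einstein (ctrans B) (ctrans A).
Proof.
by rewrite -(ofMK A) -(ofMK B) !einstein_ofM !ctrans_ofM einstein_ofM hadjM.
Qed.

Lemma hK N (I : 'I_N -> nat) M (J : 'I_M -> nat) (A : tensor C I J) :
  ctrans (ctrans A) = A.
Proof. by rewrite -(ofMK A) !ctrans_ofM hadjK. Qed.

Lemma mp_exists N (I : 'I_N -> nat) M (J : 'I_M -> nat) (A : tensor C I J) :
  exists X, is_mpinv A X.
Proof.
have [X [h1 h2 h3 h4]] := mx_mp_exists (toM A).
exists (ofM X); rewrite -(ofMK A) /is_mpinv !einstein_ofM !ctrans_ofM.
by rewrite h1 h2 h3 h4.
Qed.

Lemma mpinvP N (I : 'I_N -> nat) M (J : 'I_M -> nat) (A : tensor C I J) :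
  is_mpinv A (mpinv A).
Proof.
rewrite /mpinv; apply: epsilon_spec; exact: mp_exists.
Qed.

End T.
Section U.
Variable C : numClosedFieldType.
Local Notation e := (@einstein C _ _ _ _ _ _).
Local Notation h := (@ctrans C _ _ _ _).

Lemma mp_unique N (I : 'I_N -> nat) M (J : 'I_M -> nat) (A : tensor C I J) X Y :
  is_mpinv A X -> is_mpinv A Y -> X = Y.
Proof.
move=> [x1 x2 x3 x4] [y1 y2 y3 y4].
have s1 : h A = e (h A) (e A Y).
  by rewrite -{1}y1 hM y3.
have s2 : h A = e (e X A) (h A).
  by rewrite -{1}x1 eA hM x4.
have eX : X = e X (e A Y).
  rewrite -{1}x2 eA -x3 hM s1 -(eA (h X)) -hM x3.
  by rewrite !eA -(eA A X (e A Y)) -(eA X (e A X)) -(eA X A X) x2.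
have eY : Y = e X (e A Y).
  rewrite -{1}y2 -y4 hM s2 (eA (e X A) (h A) (h Y)) -hM y4 (eA (e X A)) y2.
  by rewrite eA.
by rewrite eX -eY.
Qed.

End U.
Section V.
Variable C : numClosedFieldType.
Local Notation e := (@einstein C _ _ _ _ _ _).
Local Notation h := (@ctrans C _ _ _ _).

Lemma AXAZ N (I : 'I_N -> nat) M (J : 'I_M -> nat) K (H : 'I_K -> nat)
  (A : tensor C I J) X (Z : tensor C J H) :
  is_mpinv A X -> e A (e X (e A Z)) = e A Z.
Proof. by case=> x1 _ _ _; rewrite -(eA X A Z) -(eA A) -(eA A X A) x1. Qed.

Lemma XAXZ N (I : 'I_N -> nat) M (J : 'I_M -> nat) K (H : 'I_K -> nat)
  (A : tensor C I J) X (Z : tensor C I H) :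
  is_mpinv A X -> e X (e A (e X Z)) = e X Z.
Proof. by case=> _ x2 _ _; rewrite -(eA A X Z) -(eA X) -(eA X A X) x2. Qed.

Lemma key N (I : 'I_N -> nat) K (H : 'I_K -> nat)
  L (G : 'I_L -> nat) M (J : 'I_M -> nat)
  (R : tensor C I H) (T : tensor C G J) (A : tensor C I J)
  Rp Tp (U : tensor C I G) (V : tensor C H J) Up Vp :
  e A Tp = U -> e Rp A = V -> e U T = A -> e R V = A ->
  is_mpinv U Up -> is_mpinv V Vp ->
  is_mpinv (e V Tp) (e (e Up A) Vp).
Proof.
move=> hU hV fU fV mU mV.
have BX : e (e V Tp) (e (e Up A) Vp) = e V Vp.
  rewrite -hV (eA Rp A Tp) hU !eA -fU (eA U T Vp) (AXAZ _ mU).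
  by rewrite -(eA U T) fU -(eA Rp) hV.
have XB : e (e (e Up A) Vp) (e V Tp) = e Up U.
  rewrite !eA -fV (eA R V) (AXAZ _ mV) -(eA R V) fV hU.
  done.
case: mV => v1 v2 v3 v4; case: mU => u1 u2 u3 u4.
split.
- by rewrite BX -(eA (e V Vp) V Tp) v1.
- rewrite XB (eA Up A Vp) (eA Up U) (XAXZ _ (And4 u1 u2 u3 u4)).
  by rewrite -eA.
- by rewrite BX v3.
- by rewrite XB u4.
Qed.

End V.

Unset Implicit Arguments.
Theorem theorem3p3 (C : numClosedFieldType)
  (N : nat) (I : 'I_N -> nat) (K : nat) (H : 'I_K -> nat)
  (L : nat) (G : 'I_L -> nat) (M : nat) (J : 'I_M -> nat)
  (R : tensor C I H) (S : tensor C H G) (T : tensor C G J) (A : tensor C I J) :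
  A = einstein (einstein R S) T ->
  mpinv (einstein (einstein (mpinv R) A) (mpinv T)) =
  einstein (einstein (mpinv (einstein A (mpinv T))) A)
           (mpinv (einstein (mpinv R) A)).
Proof.
move=> hA.
have [r1 _ _ _] := mpinvP R.
have [t1 _ _ _] := mpinvP T.
have fU : einstein (einstein A (mpinv T)) T = A.
  rewrite eA {1}hA eA -(eA T (mpinv T) T) t1.
  by rewrite hA.
have fV : einstein R (einstein (mpinv R) A) = A.
  rewrite {1}hA -!eA r1.
  by rewrite hA.
apply: (mp_unique (mpinvP _)).
apply: (key (R := R) (T := T)) => //; exact: mpinvP.
Qed.
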